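(* Let $P\in\Delta_{\mathcal{T},\mathcal{X},\mathcal{Y}}$ with $H_P(X)>0$ and $H_P(Y)>0$. If under $P$ both $T$ is independent of $X$ and $T$ is independent of $Y$, then $\arg\max_{Q\in\Delta_P}H_Q(T\mid X,Y)$ contains more than one element.
   Context: $T,X,Y$ are random variables with finite state spaces $\mathcal{T},\mathcal{X},\mathcal{Y}$; $\Delta_{\mathcal{T},\mathcal{X},\mathcal{Y}}$ is the set of all joint distributions on $\mathcal{T}\times\mathcal{X}\times\mathcal{Y}$. For $P\in\Delta_{\mathcal{T},\mathcal{X},\mathcal{Y}}$, $\Delta_P=\{Q\in\Delta_{\mathcal{T},\mathcal{X},\mathcal{Y}}: Q(X=x,T=t)=P(X=x,T=t),\ Q(Y=y,T=t)=P(Y=y,T=t)\ \forall x,y,t\}$. $H$ denotes Shannon entropy; $H_Q(T\mid X,Y)$ the conditional entropy under $Q$. *)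

(* Defs.v *)
From HB Require Import structures.
From mathcomp Require Import all_boot.
From Stdlib Require Import Reals.

Set Implicit Arguments.
Unset Strict Implicit.
Unset Printing Implicit Defensive.

Local Open Scope R_scope.

Definition rsum (I : finType) (F : I -> R) : R := \big[Rplus/0]_(i : I) F i.

Section Info.
Variables (T X Y : finType).

Definition is_dist (Q : T -> X -> Y -> R) : Prop :=
  (forall t x y, 0 <= Q t x y) /\
  rsum (fun t => rsum (fun x => rsum (fun y => Q t x y))) = 1.

Definition marg_T (Q : T -> X -> Y -> R) (t : T) : R :=
  rsum (fun x => rsum (fun y => Q t x y)).
Definition marg_X (Q : T -> X -> Y -> R) (x : X) : R :=
  rsum (fun t => rsum (fun y => Q t x y)).
Definition marg_Y (Q : T -> X -> Y -> R) (y : Y) : R :=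
  rsum (fun t => rsum (fun x => Q t x y)).
Definition marg_TX (Q : T -> X -> Y -> R) (t : T) (x : X) : R :=
  rsum (fun y => Q t x y).
Definition marg_TY (Q : T -> X -> Y -> R) (t : T) (y : Y) : R :=
  rsum (fun x => Q t x y).
Definition marg_XY (Q : T -> X -> Y -> R) (x : X) (y : Y) : R :=
  rsum (fun t => Q t x y).

Definition plogp (p : R) : R := if Rle_dec p 0 then 0 else p * ln p.

Definition entropy_X (Q : T -> X -> Y -> R) : R :=
  - rsum (fun x => plogp (marg_X Q x)).
Definition entropy_Y (Q : T -> X -> Y -> R) : R :=
  - rsum (fun y => plogp (marg_Y Q y)).

Definition cond_entropy_T_XY (Q : T -> X -> Y -> R) : R :=
  - rsum (fun t => rsum (fun x => rsum (fun y =>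
      if Rle_dec (Q t x y) 0 then 0
      else Q t x y * ln (Q t x y / marg_XY Q x y)))).

Definition DeltaP (P Q : T -> X -> Y -> R) : Prop :=
  is_dist Q /\
  (forall t x, marg_TX Q t x = marg_TX P t x) /\
  (forall t y, marg_TY Q t y = marg_TY P t y).

Definition in_argmax_condent (P Q : T -> X -> Y -> R) : Prop :=
  DeltaP P Q /\
  forall Q', DeltaP P Q' -> cond_entropy_T_XY Q' <= cond_entropy_T_XY Q.

Definition indep_TX (Q : T -> X -> Y -> R) : Prop :=
  forall t x, marg_TX Q t x = marg_T Q t * marg_X Q x.
Definition indep_TY (Q : T -> X -> Y -> R) : Prop :=
  forall t y, marg_TY Q t y = marg_T Q t * marg_Y Q y.

End Info.

(* Main.v *)
Require Import Defs.
From HB Require Import structures.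
From mathcomp Require Import all_boot.
From Stdlib Require Import Reals Lra Classical.

Set Implicit Arguments.
Unset Strict Implicit.
Local Open Scope R_scope.

Lemma RplusA : associative Rplus. Proof. by move=> a b c; rewrite Rplus_assoc. Qed.
HB.instance Definition _ := Monoid.isComLaw.Build R 0 Rplus RplusA Rplus_comm Rplus_0_l.

Section S.
Variable I J : finType.

Lemma rsum_ext (F G : I -> R) : (forall i, F i = G i) -> rsum F = rsum G.
Proof. move=> h; rewrite /rsum; apply: eq_bigr => i _; exact: h. Qed.

Lemma rsum_plus (F G : I -> R) : rsum (fun i => F i + G i) = rsum F + rsum G.
Proof. by rewrite /rsum big_split. Qed.

Lemma rsum_scal (c : R) (F : I -> R) : rsum (fun i => c * F i) = c * rsum F.
Proof.
rewrite /rsum; symmetry; apply: (big_endo (fun x => c * x)).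
  by move=> a b; rewrite Rmult_plus_distr_l.
by rewrite Rmult_0_r.
Qed.

Lemma rsum_opp (F : I -> R) : rsum (fun i => - F i) = - rsum F.
Proof.
rewrite (@rsum_ext _ (fun i => -1 * F i)); last by move=> i; ring.
rewrite rsum_scal; ring.
Qed.

Lemma rsum_le (F G : I -> R) : (forall i, F i <= G i) -> rsum F <= rsum G.
Proof.
move=> h; rewrite /rsum; apply: (big_ind2 (fun a b => a <= b)); [lra| |].
  move=> a b c d; lra.
by move=> i _; apply: h.
Qed.

Lemma rsum_ge0 (F : I -> R) : (forall i, 0 <= F i) -> 0 <= rsum F.
Proof.
move=> h; rewrite /rsum; apply: (big_ind (fun a => 0 <= a)); [lra| |].
  move=> a b; lra.
by move=> i _; apply: h.
Qed.

Lemma rsum0 : rsum (fun i : I => 0) = 0.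
Proof. by rewrite /rsum big1. Qed.

Lemma rsum_D1 (F : I -> R) j :
  rsum F = F j + \big[Rplus/0]_(i | i != j) F i.
Proof. by rewrite /rsum (bigD1 j). Qed.

Lemma rsum_single (F : I -> R) j : (forall i, 0 <= F i) -> F j <= rsum F.
Proof.
move=> h; rewrite (rsum_D1 F j).
have: 0 <= \big[Rplus/0]_(i | i != j) F i.
  apply: (big_ind (fun a => 0 <= a)); [lra| |]. move=> a b; lra. by move=> i _; apply: h.
lra.
Qed.

Lemma rsum_exch (F : I -> J -> R) :
  rsum (fun i => rsum (fun j => F i j)) = rsum (fun j => rsum (fun i => F i j)).
Proof. by rewrite /rsum exchange_big. Qed.

End S.

Lemma rsum2_lin (I J : finType) (c1 c2 c3 : R) (F G H : I -> J -> R) :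
  rsum (fun i => rsum (fun j => c1 * F i j + c2 * G i j + c3 * H i j)) =
  c1 * rsum (fun i => rsum (fun j => F i j)) + c2 * rsum (fun i => rsum (fun j => G i j))
  + c3 * rsum (fun i => rsum (fun j => H i j)).
Proof.
rewrite (@rsum_ext _ _ (fun i => c1 * rsum (fun j => F i j) + c2 * rsum (fun j => G i j)
   + c3 * rsum (fun j => H i j))); last first.
  by move=> i; rewrite !rsum_plus !rsum_scal.
by rewrite !rsum_plus !rsum_scal.
Qed.

Lemma exists_pos (I : finType) (F : I -> R) :
  (forall i, 0 <= F i) -> rsum F = 1 -> exists i, 0 < F i.
Proof.
move=> h1 h2; apply: NNPP => hn.
have: rsum F = 0.
  rewrite -(@rsum0 I); apply: rsum_ext => i.
  have := h1 i; have: ~ 0 < F i by move=> hp; apply: hn; exists i.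
  lra.
lra.
Qed.

Lemma plogp0 : plogp 0 = 0.
Proof. by rewrite /plogp; case: Rle_dec => // ?; lra. Qed.

Lemma plogp1 : plogp 1 = 0.
Proof. rewrite /plogp; case: Rle_dec => ?; [lra|]. by rewrite ln_1 Rmult_0_r. Qed.

Lemma two_pos (I : finType) (F : I -> R) :
  (forall i, 0 <= F i) -> rsum F = 1 -> 0 < - rsum (fun i => plogp (F i)) ->
  exists i j, i != j /\ 0 < F i /\ 0 < F j.
Proof.
move=> h1 h2 h3; apply: NNPP => hn.
have [i hi] := exists_pos h1 h2.
have hz : forall j, j != i -> F j = 0.
  move=> j hj; have := h1 j; have : ~ 0 < F j.
    by move=> hp; apply: hn; exists i, j; split => //; rewrite eq_sym.
  lra.
have hFi : F i = 1.
  rewrite -h2 (rsum_D1 F i) big1; first by rewrite Rplus_0_r.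
  by move=> j hj; apply: hz.
have : rsum (fun i => plogp (F i)) = 0.
  rewrite (rsum_D1 _ i) big1 /= ?hFi ?plogp1 ?Rplus_0_r //.
  by move=> j hj; rewrite hz // plogp0.
lra.
Qed.

Definition ind (I : finType) (i0 i : I) : R := if i == i0 then 1 else 0.

Lemma rsum_ind (I : finType) (i0 : I) : rsum (fun i => ind i0 i) = 1.
Proof.
rewrite (rsum_D1 _ i0) big1 /ind ?eqxx ?Rplus_0_r //.
by move=> i /negbTE ->.
Qed.

Section Main.
Variables (T X Y : finType) (P : T -> X -> Y -> R).
Hypothesis hP : is_dist P.
Hypothesis hTX : indep_TX P.
Hypothesis hTY : indep_TY P.

Let p t := marg_T P t.
Let a x := marg_X P x.
Let b y := marg_Y P y.

Lemma P0 t x y : 0 <= P t x y.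
Proof. by case: hP. Qed.

Lemma p0 t : 0 <= p t.
Proof. by apply: rsum_ge0 => x; apply: rsum_ge0 => y; apply: P0. Qed.
Lemma a0 x : 0 <= a x.
Proof. by apply: rsum_ge0 => t; apply: rsum_ge0 => y; apply: P0. Qed.
Lemma b0 y : 0 <= b y.
Proof. by apply: rsum_ge0 => t; apply: rsum_ge0 => x; apply: P0. Qed.

Lemma sum_p : rsum p = 1.
Proof. by case: hP. Qed.
Lemma sum_a : rsum a = 1.
Proof. rewrite /a /marg_X rsum_exch; exact: sum_p. Qed.
Lemma sum_b : rsum b = 1.
Proof.
rewrite /b /marg_Y rsum_exch -sum_p; apply: rsum_ext => t; by rewrite rsum_exch.
Qed.

Lemma a1 x : a x <= 1.
Proof. rewrite -sum_a; apply: rsum_single; exact: a0. Qed.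
Lemma b1 y : b y <= 1.
Proof. rewrite -sum_b; apply: rsum_single; exact: b0. Qed.

Lemma bound Q : DeltaP P Q -> cond_entropy_T_XY Q <= - rsum (fun t => plogp (p t)).
Proof.
move=> [[hQ0 hQ1] [hQX _]].
have pt t : marg_T Q t = p t.
  by rewrite /marg_T /p /marg_T; apply: rsum_ext => x; apply: hQX.
set m := marg_XY Q.
have m0 x y : 0 <= m x y by apply: rsum_ge0.
have sum_m : rsum (fun x => rsum (fun y => m x y)) = 1.
  rewrite /m /marg_XY -hQ1 rsum_exch.
  rewrite (@rsum_ext _ (fun y => rsum (fun x => rsum (fun t => Q t x y)))
     (fun y => rsum (fun t => rsum (fun x => Q t x y)))); last by move=> y; apply: rsum_exch.
  rewrite rsum_exch; apply: rsum_ext => t; apply: rsum_exch.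
have key t x y :
  - (if Rle_dec (Q t x y) 0 then 0 else Q t x y * ln (Q t x y / m x y)) <=
  (- ln (p t)) * Q t x y + (-1) * Q t x y + p t * m x y.
  have hp := p0 t; have hm := m0 x y; have hq := hQ0 t x y.
  case: Rle_dec => hq0 /=.
    have -> : Q t x y = 0 by lra.
    have := Rmult_le_pos _ _ hp hm; lra.
  have qp : Q t x y <= p t.
    rewrite -pt; apply: (Rle_trans _ (rsum (fun y => Q t x y))).
      apply: (@rsum_single _ (fun y => Q t x y) y) => y'; exact: hQ0.
    apply: (@rsum_single _ (fun x => rsum (fun y => Q t x y)) x).
    by move=> x'; apply: rsum_ge0.
  have qm : Q t x y <= m x y.
    apply: (@rsum_single _ (fun t => Q t x y) t) => t'; exact: hQ0.
  set q := Q t x y in hq0 qp qm *.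
  have qpos : 0 < q by lra.
  have ppos : 0 < p t by lra.
  have mpos : 0 < m x y by lra.
  have hz : 0 < p t * m x y / q.
    apply: Rdiv_lt_0_compat => //; exact: Rmult_lt_0_compat.
  have hl : ln (p t * m x y / q) <= p t * m x y / q - 1.
    have := exp_ineq1_le (ln (p t * m x y / q)); rewrite exp_ln //; lra.
  rewrite /Rdiv in hl hz *.
  rewrite !ln_mult // ?ln_Rinv // in hl; try by apply: Rinv_0_lt_compat.
  2: exact: Rmult_lt_0_compat.
  rewrite ln_mult ?ln_Rinv //; last by apply: Rinv_0_lt_compat.
  have e : q * (p t * m x y * / q) = p t * m x y by field; lra.
  have := Rmult_le_compat_l q _ _ (Rlt_le _ _ qpos) hl.
  nra.
rewrite /cond_entropy_T_XY -rsum_opp.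
apply: Rle_trans.
  apply: rsum_le => t; rewrite -rsum_opp; apply: rsum_le => x; rewrite -rsum_opp.
  apply: rsum_le => y; exact: key.
rewrite (@rsum_ext _ _ (fun t => - plogp (p t))); last first.
  move=> t; rewrite rsum2_lin sum_m.
  have -> : rsum (fun x => rsum (fun y => Q t x y)) = p t by rewrite -pt.
  rewrite /plogp; case: Rle_dec => h /=.
    have -> : p t = 0 by have := p0 t; lra.
    ring.
  ring.
by rewrite rsum_opp; apply: Rle_refl.
Qed.


Lemma coupling (r : X -> Y -> R) :
  (forall x y, 0 <= r x y) ->
  (forall x, rsum (fun y => r x y) = a x) ->
  (forall y, rsum (fun x => r x y) = b y) ->
  in_argmax_condent P (fun t x y => p t * r x y).
Proof.
move=> r0 rX rY.
have sum_r : rsum (fun x => rsum (fun y => r x y)) = 1.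
  by rewrite (rsum_ext rX) sum_a.
have hD : DeltaP P (fun t x y => p t * r x y).
  split; [split|split].
  - by move=> t x y; apply: Rmult_le_pos; [apply: p0| apply: r0].
  - rewrite -sum_p; apply: rsum_ext => t.
    rewrite (rsum_ext (fun x => rsum_scal (p t) (fun y => r x y))) rsum_scal sum_r.
    ring.
  - move=> t x; rewrite /marg_TX rsum_scal rX; symmetry; exact: hTX.
  - move=> t y; rewrite /marg_TY rsum_scal rY; symmetry; exact: hTY.
split => // Q' hQ'; apply: Rle_trans (bound hQ') _.
have mxy x y : marg_XY (fun t x y => p t * r x y) x y = r x y.
  rewrite /marg_XY (@rsum_ext _ _ (fun t => r x y * p t)); last by move=> t; ring.
  by rewrite rsum_scal sum_p Rmult_1_r.
rewrite /cond_entropy_T_XY.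
apply: Req_le; congr (- _); symmetry.
transitivity (rsum (fun t => plogp (p t) * rsum (fun x => rsum (fun y => r x y)))); last first.
  by rewrite sum_r; apply: rsum_ext => t; ring.
apply: rsum_ext => t; rewrite -rsum_scal; apply: rsum_ext => x; rewrite -rsum_scal; apply: rsum_ext => y.
rewrite mxy.
have hp := p0 t; have hr := r0 x y.
case: Rle_dec => h /=.
  have : p t * r x y = 0 by have := Rmult_le_pos _ _ hp hr; lra.
  case/Rmult_integral => ->; last by ring.
  by rewrite plogp0; ring.
have hp' : 0 < p t.
  case: (Rle_lt_dec (p t) 0) => hh //; exfalso; apply: h.
  have -> : p t = 0 by lra.
  lra.
have hr' : 0 < r x y.
  case: (Rle_lt_dec (r x y) 0) => hh //; exfalso; apply: h.
  have -> : r x y = 0 by lra.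
  lra.
have -> : p t * r x y / r x y = p t by field; lra.
rewrite /plogp; case: Rle_dec => h2 /=; [lra| ring].
Qed.

End Main.

Lemma ind_cases (I : finType) (i1 i2 : I) : i1 != i2 -> forall i,
  ind i1 i - ind i2 i = 0 \/ (ind i1 i - ind i2 i = 1 /\ i = i1) \/
  (ind i1 i - ind i2 i = -1 /\ i = i2).
Proof.
move=> h i; rewrite /ind.
case: (eqVneq i i1) => [->|n1].
  rewrite (negbTE h); right; left; split => //; ring.
case: (eqVneq i i2) => [->|n2].
  right; right; split => //; ring.
left; ring.
Qed.

Lemma rsum_dind (I : finType) (i1 i2 : I) : rsum (fun i => ind i1 i - ind i2 i) = 0.
Proof.
rewrite (@rsum_ext _ _ (fun i => ind i1 i + (-1) * ind i2 i)); last by move=> i; ring.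
rewrite rsum_plus rsum_scal !rsum_ind; ring.
Qed.

Lemma r2_aux (ax bY A1 A2 B1 B2 dx dy : R) :
  0 <= A1 <= 1 -> 0 <= A2 <= 1 -> 0 <= B1 <= 1 -> 0 <= B2 <= 1 ->
  (dx = 0 /\ 0 <= ax \/ dx = 1 /\ ax = A1 \/ dx = -1 /\ ax = A2) ->
  (dy = 0 /\ 0 <= bY \/ dy = 1 /\ bY = B1 \/ dy = -1 /\ bY = B2) ->
  0 <= ax * bY + A1 * A2 * B1 * B2 * (dx * dy).
Proof.
move=> hA1 hA2 hB1 hB2 hx hy.
have h21 : A2 * B1 <= 1 by nra.
have h12 : A1 * B2 <= 1 by nra.
have p1 : 0 <= A1 * B2 by nra.
have p2 : 0 <= A2 * B1 by nra.
case: hx => [[-> hx]|[[-> ->]|[-> ->]]]; case: hy => [[-> hy]|[[-> ->]|[-> ->]]]; nra.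
Qed.

Theorem mainTheorem10 (T X Y : finType) (P : T -> X -> Y -> R) :
  is_dist P ->
  0 < entropy_X P ->
  0 < entropy_Y P ->
  indep_TX P ->
  indep_TY P ->
  exists Q1 Q2 : T -> X -> Y -> R,
    in_argmax_condent P Q1 /\ in_argmax_condent P Q2 /\
    exists t x y, Q1 t x y <> Q2 t x y.
Proof.
move=> hP hX hY hTX hTY.
have [x1 [x2 [hx12 [hx1 hx2]]]] :=
  two_pos (a0 hP) (sum_a hP) hX.
have [y1 [y2 [hy12 [hy1 hy2]]]] :=
  two_pos (b0 hP) (sum_b hP) hY.
have [t0 ht0] := exists_pos (p0 hP) (sum_p hP).
set a := marg_X P in hx1 hx2 *.
set b := marg_Y P in hy1 hy2 *.
set c := a x1 * a x2 * b y1 * b y2.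
have hc : 0 < c by rewrite /c; repeat apply: Rmult_lt_0_compat => //.
have sa := sum_a hP; have sb := sum_b hP.
have ha0 := a0 hP; have hb0 := b0 hP; have ha1 := a1 hP; have hb1 := b1 hP.
set r1 := fun x y => a x * b y.
set r2 := fun x y => a x * b y + c * ((ind x1 x - ind x2 x) * (ind y1 y - ind y2 y)).
have C1 := @coupling T X Y P hP hTX hTY r1.
have C2 := @coupling T X Y P hP hTX hTY r2.
exists (fun t x y => marg_T P t * r1 x y), (fun t x y => marg_T P t * r2 x y).
split; [apply: C1|split; [apply: C2|]].
- by move=> x y; apply: Rmult_le_pos.
- by move=> x; rewrite /r1 rsum_scal; rewrite sb; unfold a, b; ring.
- move=> y; rewrite /r1 (@rsum_ext _ _ (fun x => b y * a x)); last by move=> x; ring.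
  by rewrite rsum_scal sa; unfold a, b; ring.
- move=> x y; rewrite /r2.
  apply: r2_aux; try (split; [apply: ha0|apply: ha1]); try (split; [apply: hb0|apply: hb1]).
  + case: (ind_cases hx12 x) => [->|[[-> ->]|[-> ->]]]; [left|right;left|right;right] => //.
  + case: (ind_cases hy12 y) => [->|[[-> ->]|[-> ->]]]; [left|right;left|right;right] => //.
- move=> x; rewrite /r2 rsum_plus rsum_scal sb rsum_scal rsum_scal rsum_dind; unfold a, b; ring.
- move=> y; rewrite /r2 rsum_plus.
  rewrite (@rsum_ext _ _ (fun x => b y * a x)); last by move=> x; ring.
  rewrite (@rsum_ext _ (fun x => c * ((ind x1 x - ind x2 x) * (ind y1 y - ind y2 y)))
     (fun x => (c * (ind y1 y - ind y2 y)) * (ind x1 x - ind x2 x))); last by move=> x; ring.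
  rewrite !rsum_scal sa rsum_dind; unfold a, b; ring.
- exists t0, x1, y1; rewrite /r1 /r2 /ind !eqxx (negbTE hx12) (negbTE hy12).
  move=> e; have := Rmult_lt_0_compat _ _ ht0 hc; nra.
Qed.
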